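(* There exists an NMFDP whose fairness objective requires unbounded memory. Specifically, there is an NMFDP with fairness function $F$ for which there do not exist all of the following: a finite set $M$ of memory states; an initial memory $m_{\text{init}}\in M$; a memory update function $g:M\times A\times S\to M$; and a function $F':S\times M\to\mathbb{R}$, such that $F(\tau_{1,t})=F'(s_{t+1},m_{t+1})$ for every bounded trace $\tau_{1,t}$ and every $t$. Here $m_1=m_{\text{init}}$ and $m_{k+1}=g(m_k,a_k,s_{k+1})$. An example is the two-stakeholder doughnut process with $S=\{s_{\text{init}}\}$, $A=\{toX,toY\}$ and $$F(\tau_{1,T})=\Big|\sum_{t=1}^T\mathbb{I}(a_t=toX)-\sum_{t=1}^T\mathbb{I}(a_t=toY)\Big|.$$
   Context: An NMFDP is a tuple $\langle S,s_{\text{init}},A,P,R_1,\dots,R_n,\gamma,F\rangle$ with the following components: a finite state set $S$; an initial state $s_{\text{init}}$; a finite action set $A$; a transition distribution $P$; Markovian stakeholder rewards $R_i:S\times A\times S\to\mathbb{R}$; a discount factor $\gamma\in(0,1]$; and a non-Markovian fairness function $F:(S\times A)^+\times S\to\mathbb{R}$ evaluated on bounded traces $\tau_{1,t}=s_1,a_1,\dots,s_t,a_t,s_{t+1}$ with $s_1=s_{\text{init}}$. In the example, $toX$ and $toY$ are the actions that allocate one doughnut to stakeholder $X$ and to stakeholder $Y$ respectively. *)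

(* Defs.v *)
From HB Require Import structures.
From mathcomp Require Import all_boot all_order all_algebra.
From mathcomp Require Import reals.
Set Implicit Arguments. Unset Strict Implicit. Unset Printing Implicit Defensive.
Import Order.TTheory GRing.Theory Num.Theory.
Local Open Scope ring_scope.

(* A bounded trace tau_{1,t} = s_1,a_1,...,s_t,a_t,s_{t+1} is represented as
   the nonempty list [:: (s_1,a_1); ...; (s_t,a_t)] together with s_{t+1};
   F : (S x A)^+ x S -> R is given on such pairs (its value on the empty
   list is irrelevant). *)
Record NMFDP (R : realType) := {
  nm_S : finType;
  nm_sinit : nm_S;
  nm_A : finType;
  nm_P : nm_S -> nm_A -> {ffun nm_S -> R};
  nm_P_ge0 : forall s a s', 0 <= nm_P s a s';
  nm_P_sum1 : forall s a, \sum_(s' : nm_S) nm_P s a s' = 1;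
  nm_n : nat;
  nm_Rew : 'I_nm_n -> nm_S -> nm_A -> nm_S -> R;
  nm_gamma : R;
  nm_gamma_gt0 : 0 < nm_gamma;
  nm_gamma_le1 : nm_gamma <= 1;
  nm_F : seq (nm_S * nm_A) -> nm_S -> R
}.
Arguments nm_S {R} n.
Arguments nm_sinit {R} n.
Arguments nm_A {R} n.
Arguments nm_P {R} n.
Arguments nm_n {R} n.
Arguments nm_Rew {R} n.
Arguments nm_gamma {R} n.
Arguments nm_F {R} n.

(* Memory run: given the trace prefix [:: (s_1,a_1); ...; (s_t,a_t)] and the
   final state s_{t+1}, starting from m_1 = m, computes m_{t+1} where
   m_{k+1} = g m_k a_k s_{k+1}. *)
Fixpoint mem_run (S A M : Type) (g : M -> A -> S -> M) (m : M)
    (p : seq (S * A)) (slast : S) : M :=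
  match p with
  | [::] => m
  | (s, a) :: p' => mem_run g (g m a (head slast (map fst p'))) p' slast
  end.

Definition finite_memory_representable (R : realType) (N : NMFDP R) : Prop :=
  exists (M : finType) (minit : M) (g : M -> nm_A N -> nm_S N -> M)
         (F' : nm_S N -> M -> R),
    forall (a1 : nm_A N) (p : seq (nm_S N * nm_A N)) (slast : nm_S N),
      nm_F N ((nm_sinit N, a1) :: p) slast
      = F' slast (mem_run g minit ((nm_sinit N, a1) :: p) slast).

(* Main.v *)
Require Import Defs.
From mathcomp Require Import all_boot all_order all_algebra.
From mathcomp Require Import reals.
Import Order.TTheory GRing.Theory Num.Theory.
Local Open Scope ring_scope.

Section Ex.
Variable R : realType.

Definition dP (s : unit) (a : bool) : {ffun unit -> R} := [ffun _ => 1].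

Lemma dP_ge0 s a s' : 0 <= dP s a s'.
Proof. by rewrite /dP ffunE. Qed.

Lemma dP_sum1 s a : \sum_(s' : unit) dP s a s' = 1.
Proof. by rewrite (big_pred1 tt) ?ffunE // => -[]. Qed.

Definition dF (p : seq (unit * bool)) (s : unit) : R :=
  `| (count id (map snd p))%:R - (count negb (map snd p))%:R |.

Definition dN : NMFDP R :=
  @Build_NMFDP R unit tt bool dP dP_ge0 dP_sum1 0 (fun _ _ _ _ => 0) 1
    ltr01 (lexx 1) dF.

Lemma mem_run_unit (M : Type) (g : M -> bool -> unit -> M) m p :
  mem_run g m p tt = foldl (fun m sa => g m sa.2 tt) m p.
Proof.
elim: p m => [|[s a] p IH] m //=.
by rewrite IH; case: (head _ _).
Qed.

End Ex.

Theorem corollary1 (R : realType) :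
  exists N : NMFDP R, ~ finite_memory_representable N.
Proof.
exists (dN R) => -[M [minit [g [F' H]]]].
pose f (i : 'I_(#|M|.+1)) : M :=
  foldl (fun m (sa : unit * bool) => g m sa.2 tt) minit ((tt, true) :: nseq i (tt, true)).
have : ~~ injectiveb f.
  apply/negP => /injectiveP /leq_card; by rewrite card_ord ltnn.
move/injectivePn => [i [j ij fij]].
have Hi := H true (nseq i (tt, true) ++ nseq i.+1 (tt, false)) tt.
have Hj := H true (nseq j (tt, true) ++ nseq i.+1 (tt, false)) tt.
rewrite !mem_run_unit -cat_cons !foldl_cat in Hi.
rewrite !mem_run_unit -cat_cons !foldl_cat in Hj.
move: fij; rewrite /f => fij.
rewrite fij -Hj in Hi.
move: Hi; rewrite /= /dF /= !map_cat !count_cat !map_nseq !count_nseq /= !mul1n !mul0n.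
rewrite !map_nseq !count_nseq /= !mul1n !mul0n !add0n !addn0 subrr normr0.
move/eqP; rewrite eq_sym normr_eq0 subr_eq0 eqr_nat eqn_add2l.
by move=> /eqP/val_inj E; rewrite E eqxx in ij.
Qed.
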